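(* Let $m\in\mathbb{Z}_{>0}$, $|X|=m$, $S=\{-1/2,1/2\}^X$, $B=\{-1,1\}^X$, and let $\ell(y,u)=(y-u)^2$ for $y\in\{-1,1\}$, $u\in[-1,1]$. Then for every $\varepsilon,\delta\ge0$, $\#\mathsf{CompR}(S,B,\ell,\varepsilon,\delta)=0$. However, for the uniform distribution $\mu_X$ over $X$, for any $\varepsilon\in(0,3/4)$ and $\delta\in(0,1/2)$, $\#\mathsf{CompR}^{\mu_X}(B,S,\ell,\varepsilon,\delta)\ge\big(1-\sqrt{1/4+\varepsilon}\big)m$.
   Context: Comparative regression $\mathsf{CompR}_n(S,B,\ell,\varepsilon,\delta)$ (for $S\subseteq([-1,1]\cup\{*\})^X$, total $B\subseteq[-1,1]^X$): (possibly randomized) learners taking $n$ points of $X\times\{-1,1\}$ and outputting $f:X\to[-1,1]$ such that for every distribution $\mu$ on $X\times\{-1,1\}$ for which some $s\in S$ has $\Pr_{x\sim\mu|_X}[s(x)\ne*]=1$ and $\mathbb{E}_\mu[y|x]=s(x)$, with probability $\ge1-\delta$ over $n$ i.i.d. samples, $\mathbb{E}_\mu[\ell(y,f(x))]\le\inf_{b\in B}\mathbb{E}_\mu[\ell(y,b(x))]+\varepsilon$. The distribution-specific version $\mathsf{CompR}^{\mu_X}_n$ requires the guarantee only for $\mu$ with $\mu|_X=\mu_X$. $\#$ denotes the least such $n$. *)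

(* Defs.v *)
From HB Require Import structures.
From mathcomp Require Import all_boot all_order all_algebra.
From mathcomp Require Import all_classical all_reals all_analysis.
Set Implicit Arguments. Unset Strict Implicit. Unset Printing Implicit Defensive.
Import Order.TTheory GRing.Theory Num.Theory.
Local Open Scope classical_set_scope.
Local Open Scope ring_scope.

Section CompRDefs.
Context {R : realType} {X : finType}.

(* labels y in {-1,1} are encoded by booleans *)
Definition lab (b : bool) : R := if b then 1 else -1.

Definition is_distr (T : finType) (p : T -> R) : Prop :=
  (forall t, 0 <= p t) /\ \sum_(t : T) p t = 1.

Definition marg (mu : X * bool -> R) (x : X) : R := mu (x, true) + mu (x, false).

(* conditional expectation E_mu[y | x] (meaningful when marg mu x > 0) *)
Definition cond_exp (mu : X * bool -> R) (x : X) : R :=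
  (\sum_(b : bool) mu (x, b) * lab b) / marg mu x.

Definition exp_loss (loss : R -> R -> R) (mu : X * bool -> R) (f : X -> R) : R :=
  \sum_(z : X * bool) mu z * loss (lab z.2) (f z.1).

(* realizability by a partial concept class S (None = "*") :
   some s in S is defined mu_X-a.s. and E[y|x] = s(x) mu_X-a.s. *)
Definition realizable (S : set (X -> option R)) (mu : X * bool -> R) : Prop :=
  exists2 s, S s & forall x, 0 < marg mu x ->
    exists v, s x = Some v /\ cond_exp mu x = v.

(* a possibly randomized learner using n samples: randomness from an
   arbitrary probability space, output f : X -> [-1,1] *)
Record rlearner (n : nat) := RLearner {
  rl_disp : measure_display;
  rl_Omega : measurableType rl_disp;
  rl_P : probability rl_Omega R;
  rl_map : n.-tuple (X * bool) -> rl_Omega -> X -> R;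
  rl_meas : forall s x, measurable_fun setT (fun w => rl_map s w x);
  rl_range : forall s w x, -1 <= rl_map s w x <= 1 }.

Definition succ_prob n (A : rlearner n) (mu : X * bool -> R)
    (good : (X -> R) -> Prop) : R :=
  \sum_(s : n.-tuple (X * bool))
     (\prod_(i < n) mu (tnth s i)) *
     fine (rl_P A [set w | good (@rl_map n A s w)]).

Definition comp_good (B : set (X -> R)) (loss : R -> R -> R) (eps : R)
   (mu : X * bool -> R) (f : X -> R) : Prop :=
  exp_loss loss mu f <= inf [set exp_loss loss mu b | b in B] + eps.

Definition CompR n (S : set (X -> option R)) (B : set (X -> R))
    (loss : R -> R -> R) (eps delta : R) (A : rlearner n) : Prop :=
  forall mu : X * bool -> R, is_distr mu -> realizable S mu ->
    1 - delta <= succ_prob A mu (comp_good B loss eps mu).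

Definition CompR_at (muX : X -> R) n (S : set (X -> option R)) (B : set (X -> R))
    (loss : R -> R -> R) (eps delta : R) (A : rlearner n) : Prop :=
  forall mu : X * bool -> R, is_distr mu -> (forall x, marg mu x = muX x) ->
    realizable S mu ->
    1 - delta <= succ_prob A mu (comp_good B loss eps mu).

Definition S_half_partial : set (X -> option R) :=
  [set s | forall x, s x = Some (1/2) \/ s x = Some (- (1/2))].
Definition S_half_total : set (X -> R) :=
  [set s | forall x, s x = 1/2 \/ s x = - (1/2)].
Definition B_sign_partial : set (X -> option R) :=
  [set s | forall x, s x = Some 1 \/ s x = Some (-1)].
Definition B_sign_total : set (X -> R) :=
  [set s | forall x, s x = 1 \/ s x = -1].

Definition sq_loss (y u : R) : R := (y - u) ^+ 2.

End CompRDefs.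

(* Main.v *)
Require Import Defs.
From HB Require Import structures.
From mathcomp Require Import all_boot all_order all_algebra.
From mathcomp Require Import all_classical all_reals all_analysis.
From mathcomp Require Import ring lra.
Import Order.TTheory GRing.Theory Num.Theory.
Local Open Scope classical_set_scope.
Local Open Scope ring_scope.
Set Implicit Arguments. Unset Strict Implicit.

Section H.
Context {R : realType} {X : finType}.
Definition P0 : probability R R := \d_ (0:R).
Definition zlearner : @rlearner R X 0.
refine (@RLearner R X 0 _ R P0 (fun _ _ _ => 0) _ _).
- move=> s x; exact: measurable_cst.
- move=> *; rewrite /=; lra.
Defined.
Lemma exp_loss_pair (loss : R -> R -> R) (mu : X * bool -> R) f :
  exp_loss loss mu f = \sum_x (mu (x,true) * loss 1 (f x) + mu (x,false) * loss (-1) (f x)).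
Proof.
rewrite /exp_loss.
symmetry; rewrite (eq_bigr (fun x => \sum_b mu (x,b) * loss (lab b) (f x))); last by move=> x _; rewrite big_bool.
by rewrite pair_bigA /=; apply: eq_bigr => -[x b].
Qed.

Lemma sum_pair (mu : X * bool -> R) : \sum_z mu z = \sum_x marg mu x.
Proof.
symmetry; rewrite (eq_bigr (fun x => \sum_b mu (x,b))); last by move=> x _; rewrite big_bool.
by rewrite pair_bigA /=; apply: eq_bigr => -[x b].
Qed.

Lemma part1 (eps delta : R) : 0 <= eps -> 0 <= delta ->
  CompR (@S_half_partial R X) (@B_sign_total R X) sq_loss eps delta zlearner.
Proof.
move=> e0 d0 mu [mu0 mu1] [s Ss Hs].
have good : comp_good B_sign_total sq_loss eps mu (fun _ => 0).
  rewrite /comp_good.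
  have e1 : exp_loss sq_loss mu (fun _ => 0) = 1.
    rewrite /exp_loss -mu1; apply: eq_bigr => -[x b] _.
    by rewrite /sq_loss subr0; case: b => /=; rewrite expr2 ?mulNr ?mulrN ?opprK !mulr1.
  have i1 : 1 <= inf [set exp_loss sq_loss mu b | b in B_sign_total].
    apply: lb_le_inf.
      exists (exp_loss sq_loss mu (fun _ => 1)); exists (fun _ => 1) => //.
      by move=> x; left.
    move=> _ [b Bb <-].
    rewrite exp_loss_pair; have m1 : \sum_x marg mu x = 1 by rewrite -sum_pair.
    rewrite -[X in X <= _]m1; apply: ler_sum => x _.
    rewrite /marg /sq_loss.
    have mt := mu0 (x,true); have mf := mu0 (x,false).
    have [pos|npos] := ltP 0 (marg mu x).
      have [v [sv cv]] := Hs x pos.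
      have hv : v = 1/2 \/ v = - (1/2).
        by case: (Ss x); rewrite sv => -[] ->; [left|right].
      move: cv; rewrite /cond_exp big_bool /= => cv.
      have ce : mu (x, true) * 1 + mu (x, false) * -1 = v * marg mu x.
        by rewrite -cv divfK // gt_eqF.
      move: ce pos; rewrite /marg.
      case: (Bb x) => ->; case: hv => ->; rewrite !expr2 => ce pos; lra.
    move: npos; rewrite /marg.
    by case: (Bb x) => ->; rewrite !expr2 => npos; lra.
  rewrite e1; lra.
rewrite /succ_prob.
rewrite (eq_bigr (fun _ => 1)); last first.
  move=> t _; rewrite big_ord0 mul1r.
  rewrite (_ : [set w | _] = setT); first by rewrite probability_setT.
  by apply/seteqP; split => // w _; exact: good.
rewrite sumr_const card_tuple expn0; lra.
Qed.
Lemma sum_tuple_prod (T : finType) n (p : T -> R) :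
  \sum_(s : n.-tuple T) \prod_(i < n) p (tnth s i) = (\sum_t p t) ^+ n.
Proof.
rewrite -[in RHS](card_ord n) -prodr_const bigA_distr_bigA /=.
rewrite (reindex (fun f : {ffun 'I_n -> T} => [tuple f i | i < n])) /=.
  by apply: eq_bigr => f _; apply: eq_bigr => i _; rewrite tnth_mktuple.
exists (fun s : n.-tuple T => [ffun i => tnth s i]) => [f _|s _].
  by apply/ffunP => i; rewrite ffunE tnth_mktuple.
by apply: eq_from_tnth => i; rewrite tnth_mktuple ffunE.
Qed.
End H.

Section P.
Context {R : realType}.
Lemma prob_fin d (T : measurableType d) (P : probability T R) A :
  measurable A -> P A \is a fin_num.
Proof.
move=> mA; rewrite ge0_fin_numE ?measure_ge0 //.
by apply: (le_lt_trans (probability_le1 P mA)); rewrite ltry.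
Qed.

Lemma fine_disj d (T : measurableType d) (P : probability T R) A B :
  measurable A -> measurable B -> A `&` B = set0 -> fine (P A) + fine (P B) <= 1.
Proof.
move=> mA mB AB.
have := probability_le1 P (measurableU _ _ mA mB).
rewrite measureU // => h.
by rewrite -lee_fin EFinD !fineK ?prob_fin.
Qed.

Lemma fine_ge0P d (T : measurableType d) (P : probability T R) A :
  0 <= fine (P A).
Proof. by apply: fine_ge0; apply: measure_ge0. Qed.
End P.
Section M.
Context {R : realType} {X : finType}.
Variable m : nat.
Hypothesis Hm : (0 < m)%N.
Hypothesis HX : #|X| = m.

Definition mut (t : {ffun X -> bool}) (z : X * bool) : R :=
  if z.2 == t z.1 then 1 / m%:R else 0.

Lemma m_gt0 : 0 < m%:R :> R. Proof. by rewrite ltr0n. Qed.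

Lemma mut_marg t x : marg (mut t) x = 1 / m%:R.
Proof. by rewrite /marg /mut /=; case: (t x) => /=; rewrite ?addr0 ?add0r. Qed.

Lemma mut_distr t : is_distr (mut t).
Proof.
split.
  move=> z; rewrite /mut; case: ifP => // _; rewrite divr_ge0 // ?ler0n //.
rewrite sum_pair (eq_bigr (fun _ => 1 / m%:R)); last by move=> x _; rewrite mut_marg.
rewrite sumr_const (_ : #|_| = m); last by rewrite -HX.
by rewrite div1r -[_ *+ m]mulr_natr mulVf // gt_eqF // m_gt0.
Qed.


Lemma mut_real t : realizable B_sign_partial (mut t).
Proof.
exists (fun x => Some (lab (t x))).
  by move=> x; case: (t x); [left|right].
move=> x _; exists (lab (t x)); split => //.
have mn : m%:R != 0 :> R by rewrite gt_eqF // m_gt0.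
rewrite /cond_exp mut_marg big_bool /mut /=; case: (t x) => /=; field; exact: mn.
Qed.

Definition L t (f : X -> R) := \sum_x (lab (t x) - f x)^+2.

Lemma mut_loss t f : exp_loss sq_loss (mut t) f = L t f / m%:R.
Proof.
have mn : m%:R != 0 :> R by rewrite gt_eqF // m_gt0.
rewrite exp_loss_pair /L mulr_suml; apply: eq_bigr => x _; rewrite /mut /sq_loss /=.
case: (t x) => /=; field; exact: mn.
Qed.

Lemma good_bound eps t f : comp_good S_half_total sq_loss eps (mut t) f ->
  L t f <= m%:R * (1/4 + eps).
Proof.
have mn : m%:R != 0 :> R by rewrite gt_eqF // m_gt0.
rewrite /comp_good mut_loss => h.
have hinf : inf [set exp_loss sq_loss (mut t) b | b in S_half_total] <= 1/4.
  have -> : 1/4 = exp_loss sq_loss (mut t) (fun x => lab (t x) / 2) :> R.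
    rewrite mut_loss /L (eq_bigr (fun _ => 1/4)); last first.
      by move=> x _; case: (t x) => /=; rewrite expr2; field.
    rewrite sumr_const (_ : #|_| = m); last by rewrite -HX.
    rewrite -mulr_natr; field; exact: mn.
  apply: ge_inf.
    exists 0 => _ [b _ <-]; rewrite /exp_loss; apply: sumr_ge0 => z _.
    apply: mulr_ge0; last exact: sqr_ge0.
    by rewrite /mut; case: ifP => // _; rewrite divr_ge0 // ?ler0n.
  exists (fun x => lab (t x) / 2) => //.
  by move=> x; case: (t x); [left|right]; rewrite /= ?mulNr.
have h2 : L t f / m%:R <= 1/4 + eps by apply: (le_trans h); rewrite lerD2r.
by rewrite ler_pdivrMr ?m_gt0 // mulrC in h2.
Qed.

Lemma meas_good n (A : @rlearner R X n) s t eps :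
  measurable [set w | comp_good S_half_total sq_loss eps (mut t) (@rl_map R X n A s w)].
Proof.
rewrite -[X in measurable X]setTI; apply: measurable_fun_le => // => //.
rewrite /exp_loss; apply: measurable_sum => z.
apply: measurable_realfun.measurable_funM; first exact: measurable_cst.
apply: measurable_realfun.measurable_funX; apply: measurable_realfun.measurable_funB; first exact: measurable_cst.
exact: rl_meas.
Qed.

Definition flip n (s : n.-tuple (X * bool)) (t : {ffun X -> bool}) : {ffun X -> bool} :=
  [ffun x => if x \in [seq z.1 | z <- s] then t x else ~~ t x].

Lemma flipK n s : involutive (@flip n s).
Proof.
move=> t; apply/ffunP => x; rewrite !ffunE; case: (x \in [seq z.1 | z <- s]) => //=; by rewrite negbK.
Qed.

Lemma flip_w n s t : \prod_(i < n) mut (flip s t) (tnth s i) = \prod_(i < n) mut t (tnth s i).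
Proof. by apply: eq_bigr => i _; rewrite /mut ffunE map_f ?mem_tnth. Qed.

Lemma pair_sep n (s : n.-tuple (X * bool)) (t : {ffun X -> bool}) f :
  2 * #|[predC [seq z.1 | z <- s]]|%:R <= L t f + L (flip s t) f.
Proof.
rewrite /L -big_split /=.
rewrite mulr_natr -sumr_const big_mkcond /=; apply: ler_sum => x _.
rewrite ffunE inE /=; case: (x \in [seq z.1 | z <- s]) => /=.
  by apply: addr_ge0; apply: sqr_ge0.
by case: (t x) => /=; rewrite !expr2; nra.
Qed.

Lemma card_unseen n (s : n.-tuple (X * bool)) :
  m%:R - n%:R <= #|[predC [seq z.1 | z <- s]]|%:R :> R.
Proof.
have h1 := cardC (mem [seq z.1 | z <- s]).
have h2 := card_size [seq z.1 | z <- s].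
rewrite size_map size_tuple in h2.
rewrite HX in h1.
have : (#|[seq z.1 | z <- s]|%:R : R) <= n%:R by rewrite ler_nat.
have : (#|[seq z.1 | z <- s]|%:R : R) + #|[predC [seq z.1 | z <- s]]|%:R = m%:R.
  by rewrite -natrD h1.
lra.
Qed.

Lemma part2_core eps delta n (A : @rlearner R X n) : 0 < delta < 1/2 ->
  CompR_at (fun _ => 1 / m%:R) (@B_sign_partial R X) (@S_half_total R X)
         sq_loss eps delta A ->
  (1 - (1/4 + eps)) * m%:R <= n%:R.
Proof.
move=> /andP[d0 d1] HA.
rewrite leNgt; apply/negP => hn.
pose G t s := [set w | comp_good S_half_total sq_loss eps (mut t) (@rl_map R X n A s w)].
pose p t s := fine (rl_P A (G t s)).
pose w t (s : n.-tuple (X * bool)) := \prod_(i < n) mut t (tnth s i).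
have disj : forall t s, G t s `&` G (flip s t) s = set0.
  move=> t s; apply/seteqP; split => // om [/good_bound h1 /good_bound h2].
  have h3 := pair_sep s t (@rl_map R X n A s om).
  have h4 := card_unseen s.
  exfalso; move: h1 h2 h3 h4 hn; lra.
have psum : forall t s, p t s + p (flip s t) s <= 1.
  by move=> t s; apply: fine_disj; [exact: meas_good|exact: meas_good|exact: disj].
have hs : forall s, 2 * \sum_t w t s * p t s <= \sum_t w t s.
  move=> s.
  have e : \sum_t w t s * p t s = \sum_t w t s * p (flip s t) s.
    rewrite (reindex_inj (inv_inj (@flipK n s))) /=.
    by apply: eq_bigr => t _; rewrite /w flip_w.
  rewrite (_ : 2 * _ = \sum_t w t s * p t s + \sum_t w t s * p (flip s t) s); last first.
    by rewrite -e; ring.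
  rewrite -big_split /=; apply: ler_sum => t _; rewrite -mulrDr.
  rewrite -[X in _ <= X]mulr1; apply: ler_wpM2l; last exact: psum.
  by apply: prodr_ge0 => i _; apply: (mut_distr t).1.
have tot : \sum_(t : {ffun X -> bool}) \sum_s w t s = #|{ffun X -> bool}|%:R.
  rewrite (eq_bigr (fun _ => 1)); first by rewrite sumr_const.
  by move=> t _; rewrite /w sum_tuple_prod (mut_distr t).2 expr1n.
have lower : #|{ffun X -> bool}|%:R * (1 - delta) <= \sum_t \sum_s w t s * p t s.
  apply: (@le_trans _ _ (\sum_(t : {ffun X -> bool}) (1 - delta))).
    by rewrite sumr_const mulr_natl.
  apply: ler_sum => t _.
  exact: (HA (mut t) (mut_distr t) (mut_marg t) (mut_real t)).
have upper : 2 * \sum_t \sum_s w t s * p t s <= #|{ffun X -> bool}|%:R.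
  rewrite -tot (exchange_big _ _ _ _ _ (fun t s => w t s * p t s)) /=.
  rewrite (exchange_big _ _ _ _ _ (fun t s => w t s)) /= mulr_sumr.
  by apply: ler_sum => s _; exact: hs.
have Tpos : 0 < #|{ffun X -> bool}|%:R :> R.
  by rewrite ltr0n; apply/card_gt0P; exists [ffun=> true].
nra.
Qed.
End M.

Unset Implicit Arguments.
Set Strict Implicit.
Theorem lemmaC3 (R : realType) (m : nat) (X : finType) :
  (0 < m)%N -> #|X| = m ->
  (forall eps delta : R, 0 <= eps -> 0 <= delta ->
     exists A : @rlearner R X 0,
       CompR (@S_half_partial R X) (@B_sign_total R X) sq_loss eps delta A)
  /\
  (forall eps delta : R, 0 < eps < 3/4 -> 0 < delta < 1/2 ->
     forall (n : nat) (A : @rlearner R X n),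
       CompR_at (fun _ => 1 / m%:R) (@B_sign_partial R X) (@S_half_total R X)
         sq_loss eps delta A ->
       (1 - Num.sqrt (1/4 + eps)) * m%:R <= n%:R).
Proof.
move=> Hm HX; split.
  by move=> eps delta e0 d0; exists zlearner; exact: part1.
move=> eps delta /andP[e0 e1] dd n A HA.
have h := @part2_core R X m Hm HX eps delta n A dd HA.
have c0 : 0 <= 1/4 + eps by lra.
have s0 := sqrtr_ge0 (1/4 + eps).
have s2 := sqr_sqrtr c0.
rewrite expr2 in s2.
have hsc : 1/4 + eps <= Num.sqrt (1/4 + eps) by nra.
have m0 : 0 <= m%:R :> R by rewrite ler0n.
apply: le_trans h; apply: ler_wpM2r => //; lra.
Qed.
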